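(* Let $X$ be any real random variable, $a\neq 0$, $N\sim\mathcal N(0,1)$ independent of $X$, and $Y=aX+N$. For $y\in\mathbb R$ let $X_y$ have distribution $P_{X\mid Y=y}$. Then for every $y\in\mathbb{R}$, $X_y$ is sub-Gaussian; moreover for all $x>0$, $$\Pr(|X_y|\ge x)\le \sqrt{\tfrac{2}{\pi}}\,\frac{e^{y^2/2}}{h_0(y;a)}\,e^{-a^2x^2/4},$$ for every $n=1,2,\dots$, $$\mathbb{E}|X_y|^n\le \frac{n\,e^{y^2/2}}{h_0(y;a)}\Big(\frac{\sqrt2}{|a|}\Big)^n\sqrt{(n-1)!},$$ and $\mathbb{E}\big|X_y-\mathbb{E}X_y\big|^n\le 2^n\,\mathbb{E}|X_y|^n$.
   Context: $\varphi(t)=(2\pi)^{-1/2}e^{-t^2/2}$ is the standard Gaussian density, and $h_0(y;a)=\mathbb{E}[\varphi(y-aX)]$ (the density of $Y=aX+N$ at $y$, which is strictly positive). A random variable $W$ is sub-Gaussian if there exist $c,C>0$ with $\Pr(|W|>\lambda)\le Ce^{-c\lambda^2}$ for all $\lambda>0$. *)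

(* Defs.v *)
From HB Require Import structures.
From mathcomp Require Import all_boot all_order all_algebra.
From mathcomp Require Import all_classical all_reals all_analysis.
Set Implicit Arguments. Unset Strict Implicit. Unset Printing Implicit Defensive.
Import Order.TTheory GRing.Theory Num.Theory.
Import numFieldNormedType.Exports.
Local Open Scope classical_set_scope.
Local Open Scope ring_scope.

Section defs.
Variable R : realType.

Definition phi (t : R) : R := expR (- (t ^+ 2) / 2) / Num.sqrt (pi *+ 2).

Variable mu : {measure set R -> \bar R}. (* law of X *)

Definition h0 (y a : R) : R := fine (\int[mu]_x (phi (y - a * x))%:E).

(* Law of X_y ~ P_{X|Y=y} (Bayes version):
   P(X_y \in A) = E[phi(y - aX) 1_A(X)] / h0(y;a) *)
Definition cond_prob (a y : R) (A : set R) : \bar R :=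
  ((h0 y a)^-1)%:E * \int[mu]_(x in A) (phi (y - a * x))%:E.

Definition cond_abs_moment (a y : R) (n : nat) : \bar R :=
  ((h0 y a)^-1)%:E * \int[mu]_x ((`|x| ^+ n) * phi (y - a * x))%:E.

Definition cond_mean (a y : R) : R :=
  (h0 y a)^-1 * Rintegral mu setT (fun x => x * phi (y - a * x)).

Definition cond_central_abs_moment (a y : R) (n : nat) : \bar R :=
  ((h0 y a)^-1)%:E *
  \int[mu]_x ((`|x - cond_mean a y| ^+ n) * phi (y - a * x))%:E.

End defs.

Definition subgaussian_law (R : realType) (Q : set R -> \bar R) : Prop :=
  exists c C : R, 0 < c /\ 0 < C /\
    forall l : R, 0 < l -> (Q [set w : R | (l < `|w|)%R] <= (C * expR (- c * l ^+ 2))%:E)%E.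

(* Main.v *)
Require Import Defs.
From HB Require Import structures.
From mathcomp Require Import all_boot all_order all_algebra.
From mathcomp Require Import all_classical all_reals all_analysis.
From mathcomp Require Import measurable_realfun ring lra.
Import Order.TTheory GRing.Theory Num.Theory.
Import numFieldNormedType.Exports.
Local Open Scope classical_set_scope.
Local Open Scope ring_scope.

Section S.
Variable R : realType.

Lemma pow_le_fact_exp (w : R) n : 0 <= w -> w ^+ n <= n`!%:R * expR w.
Proof.
move=> w0; case: n => [|k].
  by rewrite expr0 fact0 mul1r -expR0 ler_expR.
have := expR_ge1Dxn k w0.
have f0 : 0 < (k.+1)`!%:R :> R by rewrite ltr0n fact_gt0.
move=> h.
have h2 : w ^+ k.+1 / (k.+1)`!%:R <= expR w.
  by apply: le_trans h; rewrite lerDr.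
rewrite -ler_pdivrMl //.
by rewrite mulrC.
Qed.

Lemma sq_le (u v : R) : 0 <= u -> 0 <= v -> u ^+ 2 <= v ^+ 2 -> u <= v.
Proof.
move=> u0 v0; rewrite ler_pXn2r //; by rewrite qualifE.
Qed.

Lemma phi_bound (y a t : R) :
  phi (y - a * t) <= expR (y ^+ 2 / 2) / Num.sqrt (pi *+ 2) * expR (- (a ^+ 2 * t ^+ 2) / 4).
Proof.
rewrite /phi mulrAC ler_pM2r; last by rewrite invr_gt0 sqrtr_gt0 mulrn_wgt0 // pi_gt0.
rewrite -expRD ler_expR.
have : 0 <= (y - a * t / 2) ^+ 2 by exact: sqr_ge0.
move=> h; nra.
Qed.

Lemma pow_bound (a t : R) n : a != 0 ->
  `|t| ^+ n * expR (- (a ^+ 2 * t ^+ 2) / 4) <=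
  (Num.sqrt 2 / `|a|) ^+ n * Num.sqrt (n`!%:R).
Proof.
move=> a0.
have a2 : 0 < a ^+ 2 by rewrite exprn_even_gt0 //.
apply: sq_le.
- by rewrite mulr_ge0 // ?exprn_ge0 // expR_ge0.
- by rewrite mulr_ge0 // ?exprn_ge0 // ?sqrtr_ge0 // divr_ge0 // sqrtr_ge0.
set w := a ^+ 2 * t ^+ 2 / 2.
have w0 : 0 <= w by rewrite divr_ge0 // mulr_ge0 // ?sqr_ge0 // ltW.
have E1 : (`|t| ^+ n * expR (- (a ^+ 2 * t ^+ 2) / 4)) ^+ 2
          = (2 / a ^+ 2) ^+ n * (w ^+ n * expR (- w)).
  have ew : 2 / a ^+ 2 * w = t ^+ 2.
    by rewrite /w; field.
  have ee : (2%:R * (- (a ^+ 2 * t ^+ 2) / 4)) = - w by rewrite /w; field.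
  rewrite [RHS]mulrA -[in RHS]exprMn ew -ee expRM_natl.
  by rewrite exprMn -exprM mulnC exprM real_normK ?num_real // -exprM mulnC.
have E2 : ((Num.sqrt 2 / `|a|) ^+ n * Num.sqrt (n`!%:R)) ^+ 2
          = (2 / a ^+ 2) ^+ n * n`!%:R.
  rewrite exprMn -exprM mulnC exprM sqr_sqrtr ?ler0n //.
  by rewrite expr_div_n sqr_sqrtr ?ler0n // real_normK ?num_real.
rewrite E1 E2 ler_pM2l; last by rewrite exprn_gt0 // divr_gt0.
rewrite expRN -ler_pdivlMr.
  by rewrite invrK pow_le_fact_exp.
by rewrite invr_gt0 expR_gt0.
Qed.


Lemma pow_add_le (u v : R) n : 0 <= u -> 0 <= v ->
  (u + v) ^+ n * 2 <= 2 ^+ n * (u ^+ n + v ^+ n).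
Proof.
move=> u0 v0; elim: n => [|n IH].
  by rewrite !expr0 mul1r; lra.
have key : (u + v) * (u ^+ n + v ^+ n) <= 2 * (u ^+ n.+1 + v ^+ n.+1).
  rewrite !exprS.
  have : 0 <= (u - v) * (u ^+ n - v ^+ n).
    have [uv|vu] := leP u v.
      apply: mulr_le0; first by rewrite subr_le0.
      by rewrite subr_le0 lerXn2r // qualifE.
    apply: mulr_ge0; first by rewrite subr_ge0 ltW.
    by rewrite subr_ge0 lerXn2r // ?qualifE // ltW.
  move=> h; nra.
rewrite exprS -mulrA; apply: le_trans; first by apply: (ler_wpM2l _ IH); rewrite addr_ge0.
by rewrite mulrCA exprS [2 * _]mulrC -mulrA; apply: ler_wpM2l => //; rewrite exprn_ge0.
Qed.

Lemma tangent_pow (u c : R) k : 0 <= u -> 0 <= c ->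
  c ^+ k.+1 + k.+1%:R * c ^+ k * (u - c) <= u ^+ k.+1.
Proof.
move=> u0 c0; elim: k => [|k IH].
  by rewrite !expr1 expr0 mulr1 mul1r; lra.
have h1 := ler_wpM2l u0 IH.
apply: le_trans (_ : u * (c ^+ k.+1 + k.+1%:R * c ^+ k * (u - c)) <= _); last first.
  by rewrite [X in _ <= X]exprS.
have e : u * (c ^+ k.+1 + k.+1%:R * c ^+ k * (u - c)) -
   (c ^+ k.+2 + k.+2%:R * c ^+ k.+1 * (u - c)) = k.+1%:R * c ^+ k * (u - c) ^+ 2.
  rewrite !exprS -[k.+2]addn1 -[k.+1]addn1 !natrD; ring.
rewrite -subr_ge0 e mulr_ge0 // ?sqr_ge0 // mulr_ge0 // exprn_ge0 //.
Qed.

End S.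

Section M.
Variable R : realType.
Variable mu : probability R R.

Lemma bnd_int (f : R -> R) (M : R) : measurable_fun setT f ->
  (forall x, `|f x| <= M) -> mu.-integrable setT (EFin \o f).
Proof.
move=> mf fM; apply/integrableP; split; first exact/measurable_EFinP.
apply: (@le_lt_trans _ _ (\int[mu]_(x in setT) (cst M%:E x))%E).
  apply: ge0_le_integral => //.
  - by do 2 apply: measurableT_comp => //.
  idtac.
  - by move=> x _ /=; rewrite lee_fin fM.
by rewrite integral_cst //= probability_setT mule1 ltry.
Qed.


Variables (y a : R).
Hypothesis a0 : a != 0.
Let F x := phi (y - a * x).
Let K := expR (y ^+ 2 / 2) / Num.sqrt (pi *+ 2).

Lemma F_ge0 (x : R) : 0 <= F x.
Proof. by rewrite /F /phi divr_ge0 // ?expR_ge0 // sqrtr_ge0. Qed.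

Lemma K_ge0 : 0 <= K.
Proof. by rewrite /K divr_ge0 // ?expR_ge0 // sqrtr_ge0. Qed.

Lemma mF : measurable_fun setT F.
Proof.
rewrite /F /phi.
apply: measurable_funM => //.
apply: measurableT_comp; first exact: measurable_expR.
apply: measurable_funM => //.
apply: measurable_funN.
apply: measurable_funX.
apply: measurable_funB => //.
Qed.

Lemma mpowF (k : nat) : measurable_fun setT (fun x : R => `|x| ^+ k * F x).
Proof.
apply: measurable_funM; last exact: mF.
apply: measurable_funX.
exact: normr_measurable.
Qed.

Lemma powF_bound (k : nat) (x : R) : `|x| ^+ k * F x <= K * ((Num.sqrt 2 / `|a|) ^+ k * Num.sqrt (k`!%:R)).
Proof.
apply: le_trans (_ : `|x| ^+ k * (K * expR (- (a ^+ 2 * x ^+ 2) / 4)) <= _).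
  by apply: ler_wpM2l; [rewrite exprn_ge0|exact: phi_bound].
rewrite mulrCA; apply: ler_wpM2l; first exact: K_ge0.
exact: pow_bound.
Qed.

Lemma int_powF (k : nat) : mu.-integrable setT (EFin \o (fun x : R => `|x| ^+ k * F x)).
Proof.
apply: (@bnd_int _ (K * ((Num.sqrt 2 / `|a|) ^+ k * Num.sqrt (k`!%:R)))).

  exact: mpowF.
move=> x; rewrite ger0_norm ?powF_bound //.
by rewrite mulr_ge0 ?exprn_ge0 ?F_ge0.
Qed.


Lemma int_le_cst (D : set R) (g : R -> R) (M : R) : measurable D ->
  measurable_fun setT g -> (forall x, D x -> 0 <= g x) -> (forall x, D x -> g x <= M) ->
  0 <= M -> (\int[mu]_(x in D) (g x)%:E <= M%:E)%E.
Proof.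
move=> mD mg g0 gM M0.
apply: (@le_trans _ _ (\int[mu]_(x in D) (cst M%:E x))%E).
  apply: ge0_le_integral => //.
  all: try by move=> x Dx; rewrite lee_fin ?g0 ?gM.
  by apply/measurable_EFinP; exact: measurable_funS mg.
rewrite integral_cst //.
rewrite -[X in (_ <= X)%E]mule1; apply: lee_wpmul2l; first by rewrite lee_fin.
exact: probability_le1.
Qed.

Lemma h0E : h0 mu y a = Rintegral mu setT F.
Proof. by []. Qed.

Lemma h0_ge0 : 0 <= h0 mu y a.
Proof. by rewrite h0E; apply: Rintegral_ge0 => x _; exact: F_ge0. Qed.

Lemma tail_bound (A : set R) (l : R) : measurable A -> 0 <= l ->
  (forall t, A t -> l <= `|t|) ->
  (cond_prob mu a y A <= ((h0 mu y a)^-1 * (K * expR (- (a ^+ 2 * l ^+ 2) / 4)))%:E)%E.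
Proof.
move=> mA l0 Al.
rewrite /cond_prob EFinM; apply: lee_wpmul2l; first by rewrite lee_fin invr_ge0 h0_ge0.
apply: int_le_cst => //.
- exact: mF.
- by move=> t _; exact: F_ge0.
- move=> t At; apply: le_trans; first exact: phi_bound.
  apply: ler_wpM2l; first exact: K_ge0.
  rewrite ler_expR.
  have lt : l ^+ 2 <= t ^+ 2.
    rewrite -real_normK ?num_real // -[t ^+ 2]real_normK ?num_real //.
    by rewrite lerXn2r // ?qualifE // ger0_norm // Al.
  have := ler_wpM2l (sqr_ge0 a) lt; lra.
- by rewrite mulr_ge0 ?K_ge0 ?expR_ge0.
Qed.


Lemma s_ge1 : 1 <= Num.sqrt (pi *+ 2) :> R.
Proof.
rewrite -sqrtr1 ler_sqrt; last by rewrite mulrn_wge0 // pi_ge0.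
have := @pi_ge2 R; rewrite mulr2n; lra.
Qed.

Lemma inv_s_le : (Num.sqrt (pi *+ 2))^-1 <= Num.sqrt (2 / pi) :> R.
Proof.
have s0 : 0 < Num.sqrt (pi *+ 2) :> R by apply: lt_le_trans s_ge1.
rewrite -(ler_pM2r s0) mulVf ?gt_eqF //.
rewrite -sqrtrM; last by rewrite divr_ge0 // pi_ge0.
have -> : 2 / pi * (pi *+ 2) = 2 ^+ 2 :> R.
  have := @pi_gt0 R => p0.
  by rewrite -[pi *+ 2]mulr_natr mulrA divfK ?gt_eqF // expr2.
by rewrite sqrtr_sqr ger0_norm //; lra.
Qed.

Lemma meas_ge (x : R) : measurable [set t : R | x <= `|t|].
Proof.
rewrite (_ : [set t : R | x <= `|t|] = setT `&` (@Num.norm _ R) @^-1` `[x, +oo[%classic).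
  by apply: normr_measurable => //; exact: measurable_itv.
by apply/seteqP; split => t /=; rewrite in_itv /= andbT; [move=> ->|case].
Qed.

Lemma meas_gt (x : R) : measurable [set t : R | x < `|t|].
Proof.
rewrite (_ : [set t : R | x < `|t|] = setT `&` (@Num.norm _ R) @^-1` `]x, +oo[%classic).
  by apply: normr_measurable => //; exact: measurable_itv.
by apply/seteqP; split => t /=; rewrite in_itv /= andbT; [move=> ->|case].
Qed.

Lemma part2 (x : R) : 0 < x ->
  (cond_prob mu a y [set t : R | (x <= `|t|)%R] <=
        (Num.sqrt (2 / pi) * expR (y ^+ 2 / 2) / h0 mu y a
          * expR (- (a ^+ 2 * x ^+ 2) / 4))%:E)%E.
Proof.
move=> x0.
have := @tail_bound [set t : R | x <= `|t|] x (meas_ge x) (ltW x0) (fun t h => h).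
move/le_trans; apply.
rewrite lee_fin /K.
set e := expR (y ^+ 2 / 2); set E := expR _; set h := h0 mu y a.
have -> : h^-1 * (e / Num.sqrt (pi *+ 2) * E) = (e * E * h^-1) * (Num.sqrt (pi *+ 2))^-1 by ring.
have -> : Num.sqrt (2 / pi) * e / h * E = (e * E * h^-1) * Num.sqrt (2 / pi) by ring.
apply: ler_wpM2l; last exact: inv_s_le.
by rewrite mulr_ge0 ?invr_ge0 ?h0_ge0 // mulr_ge0 // expR_ge0.
Qed.


Lemma K_le_h (E : R) : 0 <= E ->
  (h0 mu y a)^-1 * (K * E) <= Num.sqrt (2 / pi) * expR (y ^+ 2 / 2) / h0 mu y a * E.
Proof.
move=> E0; rewrite /K.
set e := expR (y ^+ 2 / 2); set h := h0 mu y a.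
have -> : h^-1 * (e / Num.sqrt (pi *+ 2) * E) = (e * E * h^-1) * (Num.sqrt (pi *+ 2))^-1 by ring.
have -> : Num.sqrt (2 / pi) * e / h * E = (e * E * h^-1) * Num.sqrt (2 / pi) by ring.
apply: ler_wpM2l; last exact: inv_s_le.
by rewrite mulr_ge0 ?invr_ge0 ?h0_ge0 // mulr_ge0 // expR_ge0.
Qed.

Lemma part1 : subgaussian_law (cond_prob mu a y).
Proof.
have a2 : 0 < a ^+ 2 by rewrite exprn_even_gt0.
have C0 : 0 <= Num.sqrt (2 / pi) * expR (y ^+ 2 / 2) / h0 mu y a.
  by rewrite divr_ge0 ?h0_ge0 // mulr_ge0 ?sqrtr_ge0 ?expR_ge0.
exists (a ^+ 2 / 4), (Num.sqrt (2 / pi) * expR (y ^+ 2 / 2) / h0 mu y a + 1).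
split; first by rewrite divr_gt0.
split; first by rewrite ltr_pwDr.
move=> l l0.
have := @tail_bound [set w : R | l < `|w|] l (meas_gt l) (ltW l0) (fun t h => ltW h).
move/le_trans; apply; rewrite lee_fin.
apply: le_trans; first by apply: K_le_h; exact: expR_ge0.
have -> : - (a ^+ 2 / 4) * l ^+ 2 = - (a ^+ 2 * l ^+ 2) / 4 by ring.
by apply: ler_wpM2r; [exact: expR_ge0| rewrite lerDl].
Qed.


Lemma sqrt_le_self (x : R) : 1 <= x -> Num.sqrt x <= x.
Proof.
move=> x1; have x0 : 0 <= x by lra.
apply: sq_le => //.
rewrite sqr_sqrtr // expr2; nra.
Qed.

Lemma part3 (n : nat) : (0 < n)%N ->
  (cond_abs_moment mu a y n <=
        (n%:R * expR (y ^+ 2 / 2) / h0 mu y a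
          * (Num.sqrt 2 / `|a|) ^+ n * Num.sqrt ((n.-1)`!)%:R)%:E)%E.
Proof.
case: n => // k _.
rewrite /cond_abs_moment.
apply: (@le_trans _ _ (((h0 mu y a)^-1 * (K * ((Num.sqrt 2 / `|a|) ^+ k.+1 * Num.sqrt (k.+1`!%:R))))%:E)).
  rewrite EFinM; apply: lee_wpmul2l; first by rewrite lee_fin invr_ge0 h0_ge0.
  apply: int_le_cst => //.
  - exact: mpowF.
  - by move=> t _; rewrite mulr_ge0 ?exprn_ge0 ?F_ge0.
  - by move=> t _; exact: powF_bound.
  - by rewrite mulr_ge0 ?K_ge0 // mulr_ge0 ?exprn_ge0 ?sqrtr_ge0 // divr_ge0 ?sqrtr_ge0.
rewrite lee_fin /K /=.
rewrite factS natrM sqrtrM ?ler0n //.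
set e := expR (y ^+ 2 / 2); set h := h0 mu y a; set c := Num.sqrt 2 / `|a|.
set s := Num.sqrt (pi *+ 2); set q := Num.sqrt (k`!%:R).
have -> : h^-1 * (e / s * (c ^+ k.+1 * (Num.sqrt k.+1%:R * q))) =
   (h^-1 * e * c ^+ k.+1 * q) * (Num.sqrt k.+1%:R * s^-1) by ring.
have -> : k.+1%:R * e / h * c ^+ k.+1 * q = (h^-1 * e * c ^+ k.+1 * q) * k.+1%:R by ring.
apply: ler_wpM2l.
  rewrite mulr_ge0 ?sqrtr_ge0 // mulr_ge0 ?exprn_ge0 // ?mulr_ge0 ?invr_ge0 ?h0_ge0 ?expR_ge0 //.
have s1 : 1 <= s by exact: s_ge1.
have sk : Num.sqrt k.+1%:R <= k.+1%:R :> R by apply: sqrt_le_self; rewrite ler1n.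
apply: le_trans sk.
rewrite -[X in _ <= X]mulr1 ler_wpM2l ?sqrtr_ge0 //.
by rewrite invf_le1 // (lt_le_trans _ s1).
Qed.


Definition Int (f : R -> R) := mu.-integrable setT (EFin \o f).

Lemma IntD f g : Int f -> Int g -> Int (fun x => f x + g x).
Proof.
move=> hf hg; rewrite /Int (_ : EFin \o _ = ((EFin \o f) \+ (EFin \o g))%E).
  exact: integrableD.
by apply/funext => x.
Qed.

Lemma IntB f g : Int f -> Int g -> Int (fun x => f x - g x).
Proof.
move=> hf hg; rewrite /Int (_ : EFin \o _ = ((EFin \o f) \- (EFin \o g))%E).
  exact: integrableB.
by apply/funext => x.
Qed.

Lemma IntZ k f : Int f -> Int (fun x => k * f x).
Proof.
move=> hf; rewrite /Int (_ : EFin \o _ = (fun x => k%:E * (EFin \o f) x)%E).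
  exact: integrableZl.
by apply/funext => x.
Qed.

Lemma IntF : Int F.
Proof.
rewrite /Int (_ : F = fun x => `|x| ^+ 0 * F x); first exact: int_powF.
by apply/funext => x; rewrite expr0 mul1r.
Qed.

Lemma IntxF : Int (fun x => x * F x).
Proof.
apply: (@bnd_int _ (K * ((Num.sqrt 2 / `|a|) ^+ 1 * Num.sqrt (1`!%:R)))).
  by apply: measurable_funM => //; exact: mF.
move=> x; rewrite normrM (ger0_norm (F_ge0 x)) -[`|x|]expr1.
exact: powF_bound.
Qed.

Lemma RintZ k f : Int f -> Rintegral mu setT (fun x => k * f x) = k * Rintegral mu setT f.
Proof. by move=> hf; rewrite RintegralZl. Qed.

Lemma RintD f g : Int f -> Int g ->
  Rintegral mu setT (fun x => f x + g x) = Rintegral mu setT f + Rintegral mu setT g.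
Proof. by move=> hf hg; rewrite RintegralD. Qed.

Lemma RintB f g : Int f -> Int g ->
  Rintegral mu setT (fun x => f x - g x) = Rintegral mu setT f - Rintegral mu setT g.
Proof. by move=> hf hg; rewrite RintegralB. Qed.

Lemma Rint_le f g : Int f -> Int g -> (forall x, f x <= g x) ->
  Rintegral mu setT f <= Rintegral mu setT g.
Proof. by move=> hf hg fg; apply: le_Rintegral. Qed.

Lemma int_fin f : Int f -> (\int[mu]_x (f x)%:E)%E = (Rintegral mu setT f)%:E.
Proof. by move=> hf; rewrite /Rintegral fineK //; exact: integrable_fin_num. Qed.


Lemma cent_pt (m x : R) n :
  `|x - m| ^+ n * F x * 2 <= 2 ^+ n * (`|x| ^+ n * F x + `|m| ^+ n * F x).
Proof.
have h1 : `|x - m| ^+ n <= (`|x| + `|m|) ^+ n.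
  by apply: lerXn2r; rewrite ?nnegrE ?addr_ge0 // ?ler_normB.
have h2 := @pow_add_le R `|x| `|m| n (normr_ge0 x) (normr_ge0 m).
have F0 := F_ge0 x.
have -> : 2 ^+ n * (`|x| ^+ n * F x + `|m| ^+ n * F x) = (2 ^+ n * (`|x| ^+ n + `|m| ^+ n)) * F x by ring.
rewrite mulrAC; apply: ler_wpM2r => //.
apply: le_trans h2; apply: ler_wpM2r => //.
Qed.

Lemma part4 (n : nat) : (0 < n)%N ->
  (cond_central_abs_moment mu a y n <= (2 ^+ n)%:E * cond_abs_moment mu a y n)%E.
Proof.
case: n => // k _.
set n := k.+1.
set m := cond_mean mu a y.
set h := h0 mu y a.
have mg : measurable_fun setT (fun x : R => `|x - m| ^+ n * F x).
  apply: measurable_funM; last exact: mF.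
  apply: measurable_funX; apply: measurableT_comp; first exact: normr_measurable.
  exact: measurable_funB.
set Bn := K * ((Num.sqrt 2 / `|a|) ^+ n * Num.sqrt (n`!%:R)).
set B0 := K * ((Num.sqrt 2 / `|a|) ^+ 0 * Num.sqrt (0`!%:R)).
have Ig : Int (fun x => `|x - m| ^+ n * F x).
  apply: (@bnd_int _ (2 ^+ n * (Bn + `|m| ^+ n * B0))) => //.
  move=> x; rewrite ger0_norm; last by rewrite mulr_ge0 ?exprn_ge0 ?F_ge0.
  have g0 : 0 <= `|x - m| ^+ n * F x by rewrite mulr_ge0 ?exprn_ge0 ?F_ge0.
  apply: le_trans (_ : `|x - m| ^+ n * F x * 2 <= _); first lra.
  apply: le_trans; first exact: cent_pt.
  apply: ler_wpM2l; first by rewrite exprn_ge0.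
  apply: lerD; first exact: powF_bound.
  apply: ler_wpM2l; first by rewrite exprn_ge0.
  by have := powF_bound 0 x; rewrite expr0 mul1r.
have IFn := int_powF n.
have IF1 := int_powF 1.
set J := Rintegral mu setT (fun x => `|x - m| ^+ n * F x).
set In := Rintegral mu setT (fun x => `|x| ^+ n * F x).
set I1 := Rintegral mu setT (fun x => `|x| ^+ 1 * F x).
have hE : h = Rintegral mu setT F by [].
have stepA : J * 2 <= 2 ^+ n * (In + `|m| ^+ n * h).
  have IFm : Int (fun x => `|m| ^+ n * F x) by exact: IntZ IntF.
  have e1 : Rintegral mu setT (fun x => 2 ^+ n * (`|x| ^+ n * F x + `|m| ^+ n * F x))
            = 2 ^+ n * (In + `|m| ^+ n * h).
    rewrite RintZ; last exact: IntD.
    by rewrite RintD // RintZ //; exact: IntF.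
  have e2 : Rintegral mu setT (fun x => 2 * (`|x - m| ^+ n * F x)) = 2 * J by rewrite RintZ.
  rewrite mulrC -e2 -e1.
  apply: Rint_le.
  - exact: IntZ.
  - by apply: IntZ; exact: IntD.
  - by move=> x; rewrite mulrC cent_pt.
have I10 : 0 <= I1 by apply: Rintegral_ge0 => x _; rewrite mulr_ge0 ?exprn_ge0 ?F_ge0.
have h0' : 0 <= h by exact: h0_ge0.
set c := h^-1 * I1.
have c0 : 0 <= c by rewrite mulr_ge0 ?invr_ge0.
have stepB : `|m| <= c.
  rewrite /m /cond_mean normrM -/h.
  rewrite (ger0_norm (x := h^-1)) ?invr_ge0 //.
  apply: ler_wpM2l; first by rewrite invr_ge0.
  apply: le_trans; first exact: (le_normr_Rintegral measurableT IntxF).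
  rewrite /I1; rewrite le_eqVlt; apply/orP; left; apply/eqP; apply: eq_Rintegral => x _.
  by rewrite normrM (ger0_norm (F_ge0 x)) expr1.
rewrite /cond_central_abs_moment /cond_abs_moment -/m -/h.
rewrite (int_fin _ Ig) (int_fin _ IFn).
rewrite -!EFinM lee_fin.
have [hz|hp] := eqVneq h 0.
  by rewrite hz invr0 !mul0r mulr0.
have hpos : 0 < h by rewrite lt_def hp h0'.
have stepC : c ^+ n * h <= In.
  have IF := IntF.
  have ch : c * h = I1 by rewrite /c mulrAC mulVf // mul1r.
  have e : Rintegral mu setT (fun x => c ^+ n * F x + (n%:R * c ^+ k) * (`|x| ^+ 1 * F x - c * F x))
           = c ^+ n * h.
    rewrite RintD; last 2 first.
    - exact: IntZ.
    - by apply: IntZ; apply: IntB => //; exact: IntZ.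
    rewrite RintZ // RintZ; last by apply: IntB => //; exact: IntZ.
    rewrite RintB //; last exact: IntZ.
    by rewrite RintZ // -hE -/I1 ch subrr mulr0 addr0.
  rewrite -e; apply: Rint_le.
  - apply: IntD; first exact: IntZ.
    by apply: IntZ; apply: IntB => //; exact: IntZ.
  - exact: IFn.
  - move=> x.
    have -> : c ^+ n * F x + n%:R * c ^+ k * (`|x| ^+ 1 * F x - c * F x)
              = (c ^+ k.+1 + k.+1%:R * c ^+ k * (`|x| - c)) * F x by rewrite expr1 /n; ring.
    apply: ler_wpM2r; first exact: F_ge0.
    exact: tangent_pow.
have mn : `|m| ^+ n <= c ^+ n by rewrite lerXn2r // nnegrE.
rewrite mulrCA; apply: ler_wpM2l; first by rewrite invr_ge0.
have : `|m| ^+ n * h <= c ^+ n * h by apply: ler_wpM2r.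
have : 0 <= 2 ^+ n :> R by rewrite exprn_ge0.
move: stepA stepC; set P := 2 ^+ n; set Q := `|m| ^+ n * h; set S := c ^+ n * h.
move=> sA sC P0 QS.
have H : P * (In + Q) <= P * (In + In) by apply: ler_wpM2l => //; lra.
have H2 : J * 2 <= P * In * 2.
  apply: (le_trans sA); apply: (le_trans H).
  have -> : In + In = In * 2 by ring.
  by rewrite mulrA.
by rewrite ler_pM2r in H2.
Qed.

End M.

Theorem proposition6 (R : realType) (d : measure_display) (T : measurableType d)
    (P : probability T R) (X : {RV P >-> R}) (a : R) :
  a != 0 ->
  forall y : R,
    subgaussian_law (cond_prob (distribution P X) a y) /\
    (forall x : R, 0 < x ->
       (cond_prob (distribution P X) a y [set t : R | (x <= `|t|)%R] <=
        (Num.sqrt (2 / pi) * expR (y ^+ 2 / 2) / h0 (distribution P X) y a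
          * expR (- (a ^+ 2 * x ^+ 2) / 4))%:E)%E) /\
    (forall n : nat, (0 < n)%N ->
       (cond_abs_moment (distribution P X) a y n <=
        (n%:R * expR (y ^+ 2 / 2) / h0 (distribution P X) y a
          * (Num.sqrt 2 / `|a|) ^+ n * Num.sqrt ((n.-1)`!)%:R)%:E)%E) /\
    (forall n : nat, (0 < n)%N ->
       (cond_central_abs_moment (distribution P X) a y n <=
        (2 ^+ n)%:E * cond_abs_moment (distribution P X) a y n)%E).
Proof.
move=> a0 y.
split; first by apply: part1.
split; first by move=> x x0; apply: part2.
split; first by move=> n n0; apply: part3.
by move=> n n0; apply: part4.
Qed.
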